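(* Let $N\ge1$ and $p\in(0,1)$ with $\overline L:=[|\log p|/\log 2]$ and $\overline M:=[Np|\log p|/(\log 2)^2]$ satisfying $1\le\overline L\le\overline M$. Let $P^{\mathcal R-\mathcal P}_{N,\overline M,\overline L}$ be the distribution on $N\times\overline M$ binary matrices $C=(c_{i,a})$ with independent rows, each uniformly distributed among the binary vectors of length $\overline M$ with exactly $\overline L$ ones. For a variable $i$ and an integer $n\ge0$, let $\mathcal E^n_i(C)=1$ if $\sum_{j\ne i}\sum_{1\le a<b\le\overline M}c_{i,a}c_{i,b}c_{j,b}c_{j,a}>n$ and $\mathcal E^n_i(C)=0$ otherwise. Then $$\sum_{C}P^{\mathcal R-\mathcal P}_{N,\overline M,\overline L}(C)\,\mathcal E^n_i(C)\ \le\ \frac{N\overline L^6}{\overline M^3}+\Bigl(\frac{N\overline L^4}{\overline M^2}\Bigr)^{n+1}.$$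
   Context: $[x]$ denotes the integer part of $x$ and $\log$ the natural logarithm. $\mathcal E^n_i(C)$ indicates that variable $i$ lies on more than $n$ cycles of length $4$ in the bipartite variable–test graph of $C$. *)

(* Defs.v *)
From HB Require Import structures.
From mathcomp Require Import all_boot all_order all_algebra.
From mathcomp Require Import reals exp.
Set Implicit Arguments. Unset Strict Implicit. Unset Printing Implicit Defensive.
Import Order.TTheory GRing.Theory Num.Theory.
Local Open Scope ring_scope.

Definition bmatrix (N M : nat) := {ffun 'I_N -> {ffun 'I_M -> bool}}.

Definition weight_set (M L : nat) : {set {ffun 'I_M -> bool}} :=
  [set r : {ffun 'I_M -> bool} | #|[set a | r a]| == L].

Definition PRP {R : realType} (N M L : nat) (C : bmatrix N M) : R :=
  \prod_(i < N) (if C i \in weight_set M L then (#|weight_set M L|%:R)^-1 else 0).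

Definition cycles4 (N M : nat) (C : bmatrix N M) (i : 'I_N) : nat :=
  \sum_(j < N | j != i) \sum_(a < M) \sum_(b < M | (a < b)%N)
     (C i a && C i b && C j b && C j a : nat).

Definition Eni {R : realType} (N M : nat) (n : nat) (i : 'I_N) (C : bmatrix N M) : R :=
  if (n < cycles4 C i)%N then 1 else 0.

(* Main.v *)
Require Import Defs.
From HB Require Import structures.
From mathcomp Require Import all_boot all_order all_algebra.
From mathcomp Require Import zify.
Set Implicit Arguments. Unset Strict Implicit. Unset Printing Implicit Defensive.

Section Card.
Variables M L : nat.
Local Notation V := {ffun 'I_M -> bool}.
Definition X (x : V) : {set 'I_M} := [set a | x a].

Lemma X_inj : injective X.
Proof. by move=> x y /setP H; apply/ffunP => a; have := H a; rewrite !inE. Qed.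

Lemma card_rowP (P : pred {set 'I_M}) :
  #|[set x : V | P (X x)]| = #|[set S | P S]|.
Proof.
rewrite -(card_imset _ X_inj); apply: eq_card => S; rewrite inE.
apply/imsetP/idP => [[x]|PS]; first by rewrite inE => Px ->.
have XS : X [ffun a => a \in S] = S by apply/setP => a; rewrite !inE ffunE.
by exists [ffun a => a \in S]; rewrite ?inE XS.
Qed.

Lemma card_sup (K : {set 'I_M}) : #|K| <= L ->
  #|[set S : {set 'I_M} | (#|S| == L) && (K \subset S)]| = 'C(M - #|K|, L - #|K|).
Proof.
move=> hK.
have hc : #|K| + #|~: K| = M by rewrite cardsC card_ord.
have -> : [set S : {set 'I_M} | (#|S| == L) && (K \subset S)] =
   (fun S' : {set 'I_M} => S' :|: K) @: [set S' : {set 'I_M} | S' \subset ~: K & #|S'| == L - #|K|].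
  apply/setP => S; rewrite inE; apply/andP/imsetP.
    move=> [/eqP hS hKS]; exists (S :\: K).
      rewrite inE subsetDr /= cardsD (setIidPr hKS) hS eqxx //.
    apply/setP => a; rewrite !inE; case: (boolP (a \in K)) => [aK|]; last by rewrite orbF.
    by rewrite (subsetP hKS _ aK) orbT.
  move=> [S']; rewrite inE => /andP[hS' /eqP hc'] ->; split; last exact: subsetUr.
  have h0 : S' :&: K = set0.
    apply/setP => a; rewrite !inE; apply/negbTE/andP => [[aS aK]].
    by have := subsetP hS' _ aS; rewrite inE aK.
  by rewrite cardsU h0 cards0 hc' subn0 subnK.
rewrite card_in_imset; last first.
  move=> A B; rewrite !inE => /andP[hA _] /andP[hB _] hAB.
  apply/setP => a; have := congr1 (fun S : {set 'I_M} => a \in S) hAB => /=; rewrite !inE.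
  case: (boolP (a \in K)) => aK; last by rewrite !orbF.
  have := subsetP hA a; have := subsetP hB a; rewrite !inE aK.
  case: (a \in B) => [/(_ isT)//|_]; case: (a \in A) => [/(_ isT)//|_] //.
rewrite cards_draws.
by have -> : #|~: K| = M - #|K| by lia.
Qed.
End Card.

Lemma ffact_le_pow n m : n ^_ m <= n ^ m.
Proof.
elim: m => [|m IH]; first by rewrite ffactn0 expn0.
rewrite ffactnSr expnS mulnC; apply: leq_mul => //; exact: leq_subr.
Qed.

Lemma bin_le_pow n k : 'C(n, k) <= n ^ k.
Proof.
apply: leq_trans (ffact_le_pow n k); rewrite -bin_ffact.
by apply: leq_pmulr; apply: fact_gt0.
Qed.

Lemma c_step M L j : j < L -> L <= M ->
  'C(M - j.+1, L - j.+1) * M <= L * 'C(M - j, L - j).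
Proof.
move=> hj hLM.
have E := mul_bin_diag (M - j) (L - j.+1).
have e1 : (M - j).-1 = M - j.+1 by lia.
have e2 : (L - j.+1).+1 = L - j by lia.
rewrite e1 e2 in E.
set a := 'C(M - j.+1, L - j.+1) in E *; set b := 'C(M - j, L - j) in E *.
have hMj : 0 < M - j by lia.
rewrite -(leq_pmul2l hMj).
have -> : (M - j) * (a * M) = ((M - j) * a) * M by rewrite mulnA.
rewrite E.
have : (L - j) * M <= L * (M - j) by nia.
move=> H.
rewrite -mulnA (mulnC b) mulnA [in X in _ <= X]mulnA (mulnC (M - j)).
by apply: leq_mul.
Qed.

Lemma c_pow M L k : k <= L -> L <= M ->
  'C(M - k, L - k) * M ^ k <= L ^ k * 'C(M, L).
Proof.
move=> hk hLM; elim: k hk => [|k IH] hk; first by rewrite !subn0 expn0 muln1 mul1n.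
rewrite expnS.
apply: leq_trans (_ : L * ('C(M - k, L - k) * M ^ k) <= _).
  rewrite mulnA (mulnA L); apply: leq_mul => //; exact: c_step.
rewrite expnS -mulnA; apply: leq_mul => //; exact: IH (ltnW hk).
Qed.

Section Tail.
Variables M L : nat.
Local Notation V := {ffun 'I_M -> bool}.

Lemma exists_sub_gen (T : finType) (B : {set T}) k : k <= #|B| ->
  exists K : {set T}, (K \subset B) && (#|K| == k).
Proof.
move=> hk; have : 0 < #|[set K : {set T} | K \subset B & #|K| == k]|.
  by rewrite cards_draws bin_gt0.
by case/card_gt0P => K; rewrite inE => H; exists K.
Qed.

Lemma exists_sub (B : {set 'I_M}) k : k <= #|B| ->
  exists K : {set 'I_M}, (K \subset B) && (#|K| == k).
Proof.
move=> hk; have : 0 < #|[set K : {set 'I_M} | K \subset B & #|K| == k]|.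
  by rewrite cards_draws bin_gt0.
by case/card_gt0P => K; rewrite inE => H; exists K.
Qed.

Lemma tail_count (r : V) k : #|X r| = L -> L <= M ->
  #|[set x : V | (#|X x| == L) && (k <= #|X r :&: X x|)]| * M ^ k
    <= L ^ k * L ^ k * 'C(M, L).
Proof.
move=> hr hLM.
have [hkL|hLk] := leqP k L; last first.
  suff -> : [set x : V | (#|X x| == L) && (k <= #|X r :&: X x|)] = set0 by rewrite cards0.
  apply/setP => x; rewrite !inE; apply/negbTE; apply/negP => /andP[_ H].
  have := subset_leq_card (subsetIl (X r) (X x)); rewrite hr => H2; lia.
set Ks := [set K : {set 'I_M} | K \subset X r & #|K| == k].
have step1 : #|[set x : V | (#|X x| == L) && (k <= #|X r :&: X x|)]| <=
    \sum_(K in Ks) #|[set x : V | (#|X x| == L) && (K \subset X x)]|.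
  have e (K : {set 'I_M}) : #|[set x : V | (#|X x| == L) && (K \subset X x)]| =
      \sum_(x | (#|X x| == L) && (K \subset X x)) 1.
    by rewrite -sum1_card; apply: eq_bigl => x; rewrite inE.
  rewrite (eq_bigr _ (fun K _ => e K)) -sum1_card.
  rewrite (exchange_big_dep predT) //= big_mkcond /=.
  apply: leq_sum => x _; case: ifP => //; rewrite inE => /andP[hx hk].
  have [K /andP[hK /eqP hKk]] := exists_sub hk.
  have KKs : K \in Ks by rewrite inE hKk eqxx (subset_trans hK (subsetIl _ _)).
  rewrite (bigD1 K) /=; last by rewrite KKs hx (subset_trans hK (subsetIr _ _)).
  by rewrite leq_addr.
have step2 : \sum_(K in Ks) #|[set x : V | (#|X x| == L) && (K \subset X x)]|
     = #|Ks| * 'C(M - k, L - k).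
  rewrite -sum_nat_const; apply: eq_bigr => K; rewrite inE => /andP[_ /eqP hK].
  rewrite (card_rowP (fun S => (#|S| == L) && (K \subset S))) card_sup hK //.
have hKs : #|Ks| = 'C(L, k) by rewrite /Ks cards_draws hr.
apply: leq_trans (leq_mul (leq_trans step1 (eq_leq step2)) (leqnn (M ^ k))) _.
rewrite hKs -mulnA -(mulnA (L ^ k)); apply: leq_mul; first exact: bin_le_pow.
exact: c_pow.
Qed.
End Tail.
Section Pairs.
Variable M : nat.
Local Notation V := {ffun 'I_M -> bool}.
Definition pairs (r x : V) : nat :=
  \sum_(a < M) \sum_(b < M | (a < b)%N) (r a && r b && x b && x a : nat).

Lemma sum_card (A : {set 'I_M}) : \sum_(b < M) (b \in A : nat) = #|A|.
Proof. rewrite -sum1_card [RHS]big_mkcond /=; apply: eq_bigr => b _; by case: (b \in A). Qed.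

Lemma pairs2 (r x : V) :
  pairs r x * 2 = #|[set a | r a && x a]| * (#|[set a | r a && x a]| - 1).
Proof.
set D := [set a | r a && x a].
have hf a b : (r a && r b && x b && x a) = (a \in D) && (b \in D).
  by rewrite !inE; case: (r a); case: (r b); case: (x a); case: (x b).
have E1 : pairs r x = \sum_(a < M) \sum_(b < M) ((a < b) && ((a \in D) && (b \in D)) : nat).
  apply: eq_bigr => a _; rewrite big_mkcond; apply: eq_bigr => b _.
  by rewrite hf; case: (a < b).
have E2 : pairs r x = \sum_(a < M) \sum_(b < M) ((b < a) && ((a \in D) && (b \in D)) : nat).
  rewrite E1 exchange_big; apply: eq_bigr => a _; apply: eq_bigr => b _.
  by rewrite andbC (andbC (a \in D)) andbC.
have E3 : pairs r x * 2 = \sum_(a < M) \sum_(b < M) ((b != a) && ((a \in D) && (b \in D)) : nat).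
  rewrite muln2 -addnn {1}E1 E2 -big_split; apply: eq_bigr => a _.
  rewrite -big_split; apply: eq_bigr => b _ /=.
  have -> : (b != a) = ((a:nat) < b) || (b < a) by rewrite -neq_ltn eq_sym.
  case: (ltngtP a b) => //=; by case: (_ \in _); case: (_ \in _).
rewrite E3.
have E4 a : \sum_(b < M) ((b != a) && ((a \in D) && (b \in D)) : nat) = (a \in D) * (#|D| - 1).
  case: (boolP (a \in D)) => aD; last by rewrite big1 // => b _; rewrite andbF.
  rewrite /= mul1n (cardsD1 a D) aD add1n subn1 /= -sum_card.
  by apply: eq_bigr => b _; rewrite !inE.
under eq_bigr => a _ do rewrite E4.
rewrite -big_distrl /= sum_card //.
Qed.
End Pairs.

From mathcomp Require Import reals exp.
Import Order.TTheory GRing.Theory Num.Theory.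

Section Real.
Variable R : realType.
Variables N M L : nat.
Hypothesis hLM : (L <= M)%N.
Hypothesis hL1 : (1 <= L)%N.
Local Notation V := {ffun 'I_M -> bool}.
Local Notation W := (weight_set M L).
Local Open Scope ring_scope.

Definition q (x : V) : R := if x \in W then (#|W|%:R)^-1 else 0.

Lemma cardW : #|W| = 'C(M, L).
Proof. by rewrite /weight_set (card_rowP (fun S => #|S| == L)) card_draws card_ord. Qed.

Lemma cardW_gt0 : (0 < #|W|)%N.
Proof. by rewrite cardW bin_gt0. Qed.

Lemma q_ge0 x : 0 <= q x.
Proof. by rewrite /q; case: (_ \in _) => //; rewrite invr_ge0 ler0n. Qed.

Lemma sum_q : \sum_x q x = 1.
Proof.
have hw : (#|W|%:R : R) != 0 by rewrite pnatr_eq0 -lt0n cardW_gt0.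
rewrite /q -big_mkcond /= sumr_const; set w := (#|W|%:R : R).
by rewrite -mulr_natr -/w mulVf.
Qed.

Lemma PRPE (C : bmatrix N M) : PRP L C = \prod_k q (C k).
Proof. by []. Qed.

Lemma tail_prob (r : V) k : r \in W ->
  \sum_x q x * (k <= #|X r :&: X x|)%N%:R <= (L%:R ^+ k * L%:R ^+ k) / M%:R ^+ k.
Proof.
move=> rW.
have hr : #|X r| = L by move: rW; rewrite inE => /eqP.
have Mpos : (0 < M)%N by apply: leq_trans hLM.
set E := [set x : V | (#|X x| == L) && (k <= #|X r :&: X x|)%N].
have -> : \sum_x q x * (k <= #|X r :&: X x|)%N%:R = #|E|%:R / #|W|%:R.
  rewrite (eq_bigr (fun x => if x \in E then (#|W|%:R)^-1 else 0)); last first.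
    move=> x _; rewrite /q !inE.
    by case: (_ == _); case: (k <= _)%N; rewrite ?mulr1 ?mulr0 ?mul0r.
  by rewrite -big_mkcond /= sumr_const -[LHS]mulr_natl mulrC.
have wpos : (0 : R) < #|W|%:R by rewrite ltr0n cardW_gt0.
have Mkpos : (0 : R) < M%:R ^+ k by rewrite exprn_gt0 // ltr0n.
rewrite ler_pdivrMr // mulrAC ler_pdivlMr //.
rewrite -!natrX -!natrM ler_nat cardW.
exact: tail_count.
Qed.

Lemma prod_bound (P : V -> V -> bool) (b : R) (S : {set 'I_N}) (i : 'I_N) :
  i \notin S -> 0 <= b -> (forall r, r \in W -> \sum_x q x * (P r x)%:R <= b) ->
  \sum_(C : bmatrix N M) PRP L C * \prod_(k in S) (P (C i) (C k))%:R <= b ^+ #|S|.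
Proof.
move=> iS b0 hb.
pose G (r : V) (k : 'I_N) (x : V) : R :=
  if k == i then (x == r)%:R else if k \in S then (P r x)%:R else 1.
have prodG r (C : bmatrix N M) :
    \prod_k G r k (C k) = (C i == r)%:R * \prod_(k in S) (P r (C k))%:R.
  rewrite (bigD1 i) //= /G eqxx; congr (_ * _).
  rewrite [RHS]big_mkcond [RHS](bigD1 i) //= (negbTE iS) mul1r.
  by apply: eq_bigr => k /negbTE ->.
have H1 C : PRP L C * \prod_(k in S) (P (C i) (C k))%:R =
    \sum_r \prod_k (q (C k) * G r k (C k)).
  rewrite [RHS](bigD1 (C i)) //= [X in _ + X]big1 ?addr0.
    by rewrite big_split /= prodG eqxx mul1r.
  by move=> r hr; rewrite big_split /= prodG eq_sym (negbTE hr) mul0r mulr0.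
under eq_bigr => C _ do rewrite H1.
rewrite exchange_big /=.
under eq_bigr => r _ do rewrite -(bigA_distr_bigA (fun k x => q x * G r k x)).
apply: le_trans (_ : \sum_r q r * b ^+ #|S| <= _); last by rewrite -mulr_suml sum_q mul1r.
apply: ler_sum => r _.
rewrite (bigD1 i) //=.
have -> : \sum_x q x * G r i x = q r.
  rewrite /G eqxx (bigD1 r) //= eqxx mulr1 big1 ?addr0 // => x /negbTE ->.
  by rewrite mulr0.
case: (boolP (r \in W)) => rW; last by rewrite /q (negbTE rW) !mul0r.
apply: ler_wpM2l; first exact: q_ge0.
have -> : \prod_(k | k != i) \sum_x q x * G r k x =
    \prod_(k in S) \sum_x q x * (P r x)%:R.
  rewrite [RHS]big_mkcond [RHS](bigD1 i) //= (negbTE iS) mul1r.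
  apply: eq_bigr => k /negbTE ki; rewrite /G ki.
  case: (k \in S) => //.
  by under eq_bigr do rewrite mulr1; rewrite sum_q.
rewrite prodr_const; apply: lerXn2r; rewrite ?nnegrE //; last exact: hb.
by apply: sumr_ge0 => x _; apply: mulr_ge0 (q_ge0 x) (ler0n _ _).
Qed.

Lemma setXX (r x : V) : [set a | r a && x a] = X r :&: X x.
Proof. by apply/setP => a; rewrite !inE. Qed.

Lemma pointwise (C : bmatrix N M) (i : 'I_N) (n : nat) :
  Eni (R:=R) n i C <= \sum_(j | j != i) (2 < #|X (C i) :&: X (C j)|)%N%:R
     + \sum_(S : {set 'I_N} | (i \notin S) && (#|S| == n.+1))
         \prod_(k in S) (1 < #|X (C i) :&: X (C k)|)%N%:R.
Proof.
have nn1 : 0 <= \sum_(j | j != i) (2 < #|X (C i) :&: X (C j)|)%N%:R :> R.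
  by apply: sumr_ge0 => j _; apply: ler0n.
have nn2 : 0 <= \sum_(S : {set 'I_N} | (i \notin S) && (#|S| == n.+1))
         \prod_(k in S) (1 < #|X (C i) :&: X (C k)|)%N%:R :> R.
  by apply: sumr_ge0 => S _; apply: prodr_ge0 => k _; apply: ler0n.
rewrite /Eni; case: ifP => hn; last exact: addr_ge0.
case: (boolP [exists j, (j != i) && (2 < #|X (C i) :&: X (C j)|)%N]).
  case/existsP => j /andP[ji hj].
  apply: le_trans (_ : 1 <= \sum_(j | j != i) (2 < #|X (C i) :&: X (C j)|)%N%:R) _; last by rewrite lerDl.
  by rewrite (bigD1 j) //= hj lerDl sumr_ge0 // => k _; apply: ler0n.
rewrite negb_exists => /forallP hall.
have hp j : j != i -> (pairs (C i) (C j) <= (1 < #|X (C i) :&: X (C j)|))%N.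
  move=> ji; have := hall j; rewrite ji /= -leqNgt => h2.
  have := pairs2 (C i) (C j); rewrite setXX.
  move: (pairs _ _) (#|_|) h2 => p o.
  by case: o => [|[|[|o]]] //= h1 h2; lia.
set T := [set j | (j != i) && (1 < #|X (C i) :&: X (C j)|)%N].
have hT : (n.+1 <= #|T|)%N.
  apply: leq_trans hn _.
  have -> : #|T| = (\sum_(j | j != i) (1 < #|X (C i) :&: X (C j)|)%N)%N.
    rewrite -sum1_card big_mkcond [RHS]big_mkcond; apply: eq_bigr => j _.
    by rewrite inE; case: (j != i); case: (1 < _)%N.
  exact: leq_sum.
have [S /andP[hST /eqP hS]] := exists_sub_gen hT.
have iS : i \notin S.
  by apply/negP => iS; have := subsetP hST i iS; rewrite inE eqxx.
apply: le_trans (_ : 1 <= \sum_(S : {set 'I_N} | (i \notin S) && (#|S| == n.+1))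
         \prod_(k in S) (1 < #|X (C i) :&: X (C k)|)%N%:R) _; last by rewrite lerDr.
rewrite (bigD1 S) /=; last by rewrite iS hS eqxx.
rewrite big1 ?lerDl; last first.
  by move=> k kS; have := subsetP hST k kS; rewrite inE => /andP[_ ->].
by apply: sumr_ge0 => S' _; apply: prodr_ge0 => k _; apply: ler0n.
Qed.

Lemma PRP_ge0 (C : bmatrix N M) : 0 <= PRP (R:=R) L C.
Proof. by rewrite PRPE; apply: prodr_ge0 => k _; apply: q_ge0. Qed.

Lemma main_gen n i :
  \sum_(C : bmatrix N M) PRP (R:=R) L C * Eni (R:=R) n i C
    <= N%:R * L%:R ^+ 6 / M%:R ^+ 3 + (N%:R * L%:R ^+ 4 / M%:R ^+ 2) ^+ n.+1.
Proof.
set b3 : R := L%:R ^+ 3 * L%:R ^+ 3 / M%:R ^+ 3.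
set b2 : R := L%:R ^+ 2 * L%:R ^+ 2 / M%:R ^+ 2.
have b3ge0 : 0 <= b3 by rewrite /b3 divr_ge0 // ?mulr_ge0 // exprn_ge0.
have b2ge0 : 0 <= b2 by rewrite /b2 divr_ge0 // ?mulr_ge0 // exprn_ge0.
have -> : N%:R * L%:R ^+ 6 / M%:R ^+ 3 = N%:R * b3 by rewrite /b3 [RHS]mulrA -exprD.
have -> : (N%:R * L%:R ^+ 4 / M%:R ^+ 2) ^+ n.+1 = N%:R ^+ n.+1 * b2 ^+ n.+1
  by rewrite /b2 -exprMn [in RHS]mulrA -exprD.
apply: le_trans (_ : \sum_(C : bmatrix N M) PRP (R:=R) L C *
   (\sum_(j | j != i) (2 < #|X (C i) :&: X (C j)|)%N%:R
     + \sum_(S : {set 'I_N} | (i \notin S) && (#|S| == n.+1))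
         \prod_(k in S) (1 < #|X (C i) :&: X (C k)|)%N%:R) <= _).
  by apply: ler_sum => C _; apply: ler_wpM2l; [exact: PRP_ge0 | exact: pointwise].
under eq_bigr do rewrite mulrDr.
rewrite big_split /=; apply: lerD.
  under eq_bigr do rewrite mulr_sumr.
  rewrite exchange_big /=.
  apply: le_trans (_ : \sum_(j | j != i) b3 <= _).
    apply: ler_sum => j ji.
    rewrite (eq_bigr (fun C : bmatrix N M => PRP L C * \prod_(k in [set j]) (2 < #|X (C i) :&: X (C k)|)%N%:R)); last by move=> C _; rewrite big_set1.
    have := @prod_bound (fun r x => 2 < #|X r :&: X x|)%N b3 [set j] i.
    rewrite cards1 expr1; apply; first by rewrite inE eq_sym.
      exact: b3ge0.
    by move=> r rW; exact: tail_prob.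
  rewrite big_mkcond /=; apply: le_trans (_ : \sum_(j < N) b3 <= _).
    by apply: ler_sum => j _; case: ifP.
  by rewrite sumr_const card_ord mulr_natl.
under eq_bigr do rewrite mulr_sumr.
rewrite exchange_big /=.
apply: le_trans (_ : \sum_(S : {set 'I_N} | (i \notin S) && (#|S| == n.+1)) b2 ^+ n.+1 <= _).
  apply: ler_sum => S /andP[iS /eqP hS].
  rewrite -hS; apply: (@prod_bound (fun r x => 1 < #|X r :&: X x|)%N) => //.
  by move=> r rW; exact: (tail_prob 2 rW).
apply: le_trans (_ : \sum_(S in [set S : {set 'I_N} | #|S| == n.+1]) b2 ^+ n.+1 <= _).
  rewrite big_mkcond [X in _ <= X]big_mkcond /=; apply: ler_sum => S _.
  rewrite inE; case: (i \notin S); case: (#|S| == n.+1) => //=.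
  exact: exprn_ge0.
rewrite sumr_const card_draws card_ord -[b2 ^+ _ *+ _]mulr_natl.
apply: ler_wpM2r; first exact: exprn_ge0.
rewrite -natrX ler_nat; exact: bin_le_pow.
Qed.
End Real.

Unset Implicit Arguments.
Local Open Scope ring_scope.

Theorem lemma4 (R : realType) (N : nat) (p : R) (n : nat) :
  (1 <= N)%N -> 0 < p -> p < 1 ->
  let Lb := Num.truncn (`|ln p| / ln 2) in
  let Mb := Num.truncn (N%:R * p * `|ln p| / (ln 2) ^+ 2) in
  (1 <= Lb)%N -> (Lb <= Mb)%N ->
  forall i : 'I_N,
  \sum_(C : bmatrix N Mb) PRP (R:=R) Lb C * Eni (R:=R) n i C
    <= N%:R * Lb%:R ^+ 6 / Mb%:R ^+ 3 + (N%:R * Lb%:R ^+ 4 / Mb%:R ^+ 2) ^+ n.+1.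
Proof.
move=> hN hp hp1 Lb Mb hL hLM i.
exact: (@main_gen R N Mb Lb hLM hL n i).
Qed.
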